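(* Let $f\colon\mathbb Z^m\to\mathbb Q\cup\{\infty\}$ be SBO jump M-convex and let $r\in\mathbb Z^m$. Let $z^{(1)},\dots,z^{(\ell)}\in\mathbb Z^m$ with $z^{(k)}\equiv r\pmod2$ for all $k$. Let $\lambda^{(1)},\dots,\lambda^{(\ell)}\ge0$ be reals with $\sum_k\lambda^{(k)}=1$, and suppose $z:=\sum_k\lambda^{(k)}z^{(k)}$ is an integer vector with $z\equiv r\pmod2$. Then \[ f(z)\le\sum_{k\in[\ell]}\lambda^{(k)}f(z^{(k)}). \]
   Context: For $x,y\in\mathbb Z^m$, write $x\sqsubseteq y$ if $|x_i|\le|y_i|$ and $x_iy_i\ge0$ for all $i$. A $2$-step decomposition of $d\in\mathbb Z^m$ is a multiset $p^{(1)},\dots,p^{(\ell)}\in\mathbb Z^m$ with $\|p^{(k)}\|_1=2$ and $p^{(k)}\sqsubseteq d$ for all $k$, and $d=\sum_kp^{(k)}$. $f$ is SBO jump M-convex if the following holds for all $z^{(1)},z^{(2)}$ with finite $f$-values. There must exist a $2$-step decomposition $p^{(1)},\dots,p^{(\ell)}$ of $z^{(2)}-z^{(1)}$ and reals $g^{(1)},\dots,g^{(\ell)}$ such that: - $f(z^{(2)})=f(z^{(1)})+\sum_kg^{(k)}$; - $f(z^{(1)}+\sum_{k\in I}p^{(k)})\le f(z^{(1)})+\sum_{k\in I}g^{(k)}$ for all $I\subseteq[\ell]$. Congruence modulo $2$ is componentwise. *)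

(* Defs.v *)
From HB Require Import structures.
From mathcomp Require Import all_boot all_order all_algebra.
From mathcomp Require Import reals.
Set Implicit Arguments. Unset Strict Implicit. Unset Printing Implicit Defensive.
Import Order.TTheory GRing.Theory Num.Theory.
Local Open Scope ring_scope.

(* Points of Z^m are row vectors 'rV[int]_m; the i-th coordinate of x is x 0 i.
   A function f : Z^m -> Q ∪ {∞} is encoded as 'rV[int]_m -> option rat,
   None standing for +∞. *)
Notation zvec m := 'rV[int]_m.

Definition sqsub (m : nat) (x y : zvec m) : Prop :=
  forall i : 'I_m, `|x 0 i| <= `|y 0 i| /\ 0 <= x 0 i * y 0 i.

Definition l1norm (m : nat) (x : zvec m) : int := \sum_(i < m) `|x 0 i|.

Definition two_step_decomp (m : nat) (d : zvec m) (ps : seq (zvec m)) : Prop :=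
  (forall p, p \in ps -> l1norm p = 2 /\ sqsub p d) /\ \sum_(p <- ps) p = d.

Definition ext_le (R : realType) (v : option rat) (c : R) : Prop :=
  match v with Some a => ratr a <= c | None => False end.

(* A decomposition p^(1..l) together with reals g^(1..l)
   is given as a list of pairs (p^(k), g^(k)); subsets I ⊆ [l] correspond to
   masks (bitseq) selecting entries of this list. *)
Definition SBO_jump_M_convex (R : realType) (m : nat) (f : zvec m -> option rat) : Prop :=
  forall (z1 z2 : zvec m) (a1 a2 : rat), f z1 = Some a1 -> f z2 = Some a2 ->
  exists pg : seq (zvec m * R)%type,
    [/\ two_step_decomp (z2 - z1) (map fst pg),
        ratr a2 = ratr a1 + \sum_(q <- pg) q.2 &
        forall I : bitseq,
          ext_le (f (z1 + \sum_(q <- mask I pg) q.1))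
                 (ratr a1 + \sum_(q <- mask I pg) q.2)].

Definition cong2 (m : nat) (x y : zvec m) : Prop :=
  forall i : 'I_m, ((x 0 i)%R = (y 0 i)%R %[mod 2])%Z.

(* Main.v *)
Require Import Defs.
From HB Require Import structures.
From mathcomp Require Import all_boot all_order all_algebra.
From mathcomp Require Import reals zify ring lra.
Set Implicit Arguments. Unset Strict Implicit. Unset Printing Implicit Defensive.
Import Order.TTheory GRing.Theory Num.Theory.
Local Open Scope ring_scope.

Lemma l1_split m (p : zvec m) (w : 'I_m) :
  l1norm p = 2 -> `|p 0 w| + \sum_(i < m | i != w) `|p 0 i| = 2.
Proof. by rewrite /l1norm (bigD1 w) //. Qed.

Lemma sum_abs_eq0 m (p : zvec m) (P : pred 'I_m) :
  \sum_(i < m | P i) `|p 0 i| = 0 -> forall y, P y -> p 0 y = 0.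
Proof.
move=> H y Py; apply/eqP; rewrite -normr_eq0; apply/eqP.
by move/eqP: H; rewrite psumr_eq0 // => /allP /(_ y (mem_index_enum _)); rewrite Py /= => /eqP.
Qed.

Lemma sum_split2 m (F : 'I_m -> int) (w x : 'I_m) : x != w ->
  \sum_(i < m | i != w) F i = F x + \sum_(i < m | (i != w) && (i != x)) F i.
Proof. by move=> h; rewrite (bigD1 x). Qed.

Lemma l1_odd m (p : zvec m) (w : 'I_m) : l1norm p = 2 -> ~~ (2 %| p 0%R w)%Z ->
  exists x, [/\ x != w, `|p 0 w| = 1, `|p 0 x| = 1 &
     forall y, y != w -> y != x -> p 0 y = 0].
Proof.
move=> hl hw; have hsp := l1_split w hl.
have hs : 0 <= \sum_(i < m | i != w) `|p 0 i| by apply: sumr_ge0.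
have hw1 : `|p 0 w| = 1 by lia.
have [x hx] : exists x : 'I_m, (x != w) && (p 0 x != 0).
  apply/existsP; apply: contraT; rewrite negb_exists => /forallP H.
  have : \sum_(i < m | i != w) `|p 0 i| = 0.
    apply: big1 => i hi; have := H i; rewrite hi /= negbK => /eqP ->; by [].
  lia.
case/andP: hx => hxw hx0.
have hsp2 : \sum_(i < m | i != w) `|p 0 i| = `|p 0 x| + \sum_(i < m | (i != w) && (i != x)) `|p 0 i| := sum_split2 _ hxw.
have hs2 : 0 <= \sum_(i < m | (i != w) && (i != x)) `|p 0 i| by apply: sumr_ge0.
have hx1 : `|p 0 x| = 1.
  lia.
exists x; split => // y hyw hyx.
have h0 : \sum_(i < m | (i != w) && (i != x)) `|p 0 i| = 0 by lia.
by apply: (sum_abs_eq0 h0); rewrite hyw hyx.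
Qed.

Lemma l1_two m (p : zvec m) (w : 'I_m) : l1norm p = 2 -> `|p 0 w| = 2 ->
  forall y, y != w -> p 0 y = 0.
Proof.
move=> hl hw; have := l1_split w hl; rewrite hw => h.
have h0 : \sum_(i < m | i != w) `|p 0 i| = 0 by lia.
exact: sum_abs_eq0 h0.
Qed.

Lemma l1_le2 m (p : zvec m) (w : 'I_m) : l1norm p = 2 -> `|p 0 w| <= 2.
Proof.
move=> hl; have := l1_split w hl.
have hs : 0 <= \sum_(i < m | i != w) `|p 0 i| by apply: sumr_ge0.
lia.
Qed.

Lemma sqsub_sign m (p d : zvec m) c : sqsub p d -> 0 < d 0 c -> 0 <= p 0 c.
Proof. by move=> /(_ c) [_ h] hd; nia. Qed.

Lemma odd_out m (I : finType) (v : I -> zvec m) (d : zvec m) (S : {set I}) w :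
 (forall x, \sum_i v i 0 x = d 0 x) -> (2 %| d 0%R w)%Z ->
 ~~ (2 %| \sum_(i in S) v i 0%R w)%Z ->
 exists j, (j \notin S) && ~~ (2 %| v j 0%R w)%Z.
Proof.
move=> hsum hd hS.
apply/existsP; apply: contraT; rewrite negb_exists => /forallP H.
have hev : (2 %| \sum_(i | i \notin S) v i 0%R w)%Z.
  by apply: rpred_sum => i hi; have := H i; rewrite hi /= negbK.
have := hsum w; rewrite (bigID (mem S)) /= => he.
by move: hS; rewrite -(rpredDr _ hev) he hd.
Qed.

Lemma walk_step m (I : finType) (v : I -> zvec m) (d : zvec m) (c : 'I_m) :
 (forall i, l1norm (v i) = 2 /\ sqsub (v i) d) ->
 (forall x, \sum_i v i 0 x = d 0 x) ->
 (forall x, (2 %| d 0%R x)%Z) -> 0 < d 0 c ->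
 forall k (S : {set I}) w, (#|I| <= #|S| + k)%N -> w != c ->
   \sum_(i in S) v i 0 c = 1 ->
   (forall x, (2 %| \sum_(i in S) v i 0%R x)%Z = (x != c) && (x != w)) ->
 exists S' : {set I}, (forall x, (2 %| \sum_(i in S') v i 0%R x)%Z) /\
    \sum_(i in S') v i 0 c = 2.
Proof.
move=> hv hsum hd hc; elim=> [|k IH] S w hk hwc hSc hSp.
all: have [j /andP [hjS hjw]] : exists j, (j \notin S) && ~~ (2 %| v j 0%R w)%Z
  by apply: (@odd_out m I v d S w hsum (hd w)); rewrite hSp eqxx andbF.
- have h1 := cardsC S.
  have h2 : (0 < #|~: S|)%N by apply/card_gt0P; exists j; rewrite inE.
  lia.
have [hlj hsj] := hv j.
have [x [hxw hjw1 hjx1 hj0]] := l1_odd hlj hjw.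
have hjc0 := sqsub_sign hsj hc.
have hS' : forall y, \sum_(i in j |: S) v i 0 y = v j 0 y + \sum_(i in S) v i 0 y.
  by move=> y; rewrite big_setU1.
have hcard : (#|I| <= #|j |: S| + k)%N by rewrite cardsU1 hjS; lia.
case: (eqVneq x c) => [exc | hxc].
  subst x; exists (j |: S); split; last by rewrite hS' hSc; lia.
  move=> y; rewrite hS'.
  case: (eqVneq y w) => [-> | hyw].
    have := hSp w; rewrite eqxx andbF; lia.
  case: (eqVneq y c) => [-> | hyc].
    by rewrite hSc; lia.
  have := hSp y; rewrite hyw hyc hj0 //; lia.
apply: (IH (j |: S) x hcard hxc).
  by rewrite hS' hSc hj0 // eq_sym.
move=> y; rewrite hS'.
case: (eqVneq y w) => [-> | hyw].
  have hwx : w != x by rewrite eq_sym.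
  have := hSp w; rewrite eqxx andbF hwc hwx /=; lia.
case: (eqVneq y x) => [-> | hyx].
  have := hSp x; rewrite hxw hxc /=. lia.
by rewrite hj0 // add0r hSp hyw.
Qed.

Lemma walk m (I : finType) (v : I -> zvec m) (d : zvec m) (c : 'I_m) :
 (forall i, l1norm (v i) = 2 /\ sqsub (v i) d) ->
 (forall x, \sum_i v i 0 x = d 0 x) ->
 (forall x, (2 %| d 0%R x)%Z) -> 0 < d 0 c ->
 exists S : {set I}, (forall x, (2 %| \sum_(i in S) v i 0%R x)%Z) /\
    \sum_(i in S) v i 0 c = 2.
Proof.
move=> hv hsum hd hc.
have [j hj] : exists j, v j 0 c != 0.
  apply/existsP; apply: contraT; rewrite negb_exists => /forallP H.
  have : \sum_i v i 0 c = 0 by apply: big1 => i _; have := H i; rewrite negbK => /eqP.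
  by rewrite hsum => h; move: hc; rewrite h ltxx.
have [hlj hsj] := hv j.
have hjc0 := sqsub_sign hsj hc.
have hle := l1_le2 c hlj.
have h1 : forall y, \sum_(i in [set j]) v i 0 y = v j 0 y by move=> y; rewrite big_set1.
case hpar : (2 %| v j 0%R c)%Z.
  have hj2 : v j 0 c = 2 by lia.
  have hz := l1_two hlj (_ : `|v j 0 c| = 2).
  exists [set j]; split; last by rewrite h1.
  move=> x; rewrite h1; case: (eqVneq x c) => [-> | hxc]; first by rewrite hj2.
  by rewrite hz //; rewrite hj2.
have [w [hwc hjc1 hjw1 hj0]] := l1_odd hlj (negbT hpar).
apply: (@walk_step m I v d c hv hsum hd hc #|I| [set j] w); first lia.
- by [].
- by rewrite h1; lia.
move=> x; rewrite h1.
case: (eqVneq x c) => [-> | hxc]; first by rewrite /=; lia.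
case: (eqVneq x w) => [-> | hxw]; first by rewrite /=; lia.
by rewrite hj0.
Qed.

Definition mset n (S : {set 'I_n}) : bitseq := [seq i \in S | i <- enum 'I_n].

Lemma big_mask_set (T : Type) (V : zmodType) (s : seq T) (S : {set 'I_(size s)})
  (F : T -> V) :
  \sum_(q <- mask (mset S) s) F q = \sum_(i in S) F (tnth (in_tuple s) i).
Proof.
rewrite big_mask; apply: eq_bigl => i /=.
rewrite /mset (nth_map i) ?size_enum_ord // nth_ord_enum andbT.
by [].
Qed.

Lemma big_all_tnth (T : Type) (V : zmodType) (s : seq T) (F : T -> V) :
  \sum_(q <- s) F q = \sum_i F (tnth (in_tuple s) i).
Proof. by rewrite big_tnth. Qed.

Lemma ext_leP (R : realType) (v : option rat) (c : R) :
  ext_le v c -> exists a, v = Some a /\ ratr a <= c.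
Proof. by case: v => //= a h; exists a. Qed.

Lemma sum_splitS (I : finType) (F : I -> int) (S : {set I}) :
  \sum_i F i = \sum_(i in S) F i + \sum_(i | i \notin S) F i.
Proof. by rewrite (bigID (mem S)). Qed.

Lemma partial_sqsub m (I : finType) (v : I -> zvec m) (d : zvec m) (S : {set I}) :
 (forall i, sqsub (v i) d) -> (forall x, \sum_i v i 0 x = d 0 x) -> forall x,
 `|\sum_(i in S) v i 0 x| <= `|d 0 x| /\ 0 <= (\sum_(i in S) v i 0 x) * d 0 x.
Proof.
move=> hv hsum x.
have he : \sum_(i in S) v i 0 x + \sum_(i | i \notin S) v i 0 x = d 0 x.
  by rewrite -hsum [RHS](bigID (mem S)) /=.
case: (lerP 0 (d 0 x)) => hd.
  have hpos : forall i, 0 <= v i 0 x.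
    by move=> i; have [h1 h2] := hv i x; nia.
  have hA : 0 <= \sum_(i in S) v i 0 x by apply: sumr_ge0.
  have hB : 0 <= \sum_(i | i \notin S) v i 0 x by apply: sumr_ge0.
  split. set A := \sum_(i in S) _ in he hA *. lia. nia.
have hneg : forall i, v i 0 x <= 0.
  by move=> i; have [h1 h2] := hv i x; nia.
have hA : \sum_(i in S) v i 0 x <= 0.
  by apply: (big_ind (fun y => y <= 0)) => //; lia.
have hB : \sum_(i | i \notin S) v i 0 x <= 0.
  by apply: (big_ind (fun y => y <= 0)) => //; lia.
split; [lia | nia].
Qed.

Lemma exchange (R : realType) m (f : zvec m -> option rat) (a b : zvec m)
  (al be : rat) (c : 'I_m) :
 SBO_jump_M_convex R f -> f a = Some al -> f b = Some be ->
 (forall x, (2 %| (b - a) 0%R x)%Z) -> 0 < (b - a) 0 c ->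
 exists P : zvec m, exists al' be',
  [/\ sqsub P (b - a) /\ (forall x, (2 %| P 0%R x)%Z), P 0 c = 2,
      f (a + P) = Some al', f (b - P) = Some be' &
      ratr al' + ratr be' <= (ratr al + ratr be : R)].
Proof.
move=> hf ha hb hev hc.
have [pg [[hps hsum] hval hI]] := hf a b al be ha hb.
pose t := tnth (in_tuple pg).
pose v i := (t i).1.
have hv : forall i, l1norm (v i) = 2 /\ sqsub (v i) (b - a).
  by move=> i; apply: hps; apply: map_f; apply: mem_tnth.
have hsumv : \sum_i v i = b - a by rewrite -hsum big_map (big_all_tnth pg).
have hsumx : forall x, \sum_i v i 0 x = (b - a) 0 x by move=> x; rewrite -hsumv summxE.
have [S [hSev hSc]] := walk hv hsumx hev hc.
pose P := \sum_(i in S) v i.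
have hPx : forall x, P 0 x = \sum_(i in S) v i 0 x by move=> x; rewrite summxE.
have hI1 := hI (mset S); have hI2 := hI (mset (~: S)).
rewrite !big_mask_set in hI1 hI2.
have hC1 : \sum_(i in ~: S) (t i).1 = (b - a) - P.
  rewrite -hsumv [in RHS](bigID (mem S)) /= /P addrC addrK.
  by apply: eq_bigl => i; rewrite inE.
have hC2 : \sum_(i in ~: S) (t i).2 = \sum_i (t i).2 - \sum_(i in S) (t i).2.
  rewrite [in RHS](bigID (mem S)) /= addrC addrK.
  by apply: eq_bigl => i; rewrite inE.
rewrite hC1 hC2 addrA [a + _]addrC subrK in hI2.
have [al' [h1 h1']] := ext_leP hI1.
have [be' [h2 h2']] := ext_leP hI2.
exists P, al', be'; split => //.
- split. move=> x; rewrite hPx. exact: (@partial_sqsub m _ v (b - a) S (fun i => (hv i).2) hsumx x).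
  by move=> x; rewrite hPx.
- by rewrite hPx.
- rewrite hval (big_all_tnth pg).
  rewrite -/t in h1' h2' *.
  lra.
Qed.

Definition dist m (z y : zvec m) : int := \sum_i `|y 0 i - z 0 i|.
Definition Phi m (z : zvec m) (s : seq (zvec m)) : int := \sum_(y <- s) dist z y.

Lemma abs_step (x y w : int) : x < w -> w < y -> (2 %| w - x)%Z -> (2 %| y - w)%Z ->
  `|x + 2 - w| + `|y - 2 - w| < `|x - w| + `|y - w|.
Proof. lia. Qed.

Lemma abs_le (x y w p : int) : `|p| <= `|y - x| -> 0 <= p * (y - x) ->
  `|x + p - w| + `|y - p - w| <= `|x - w| + `|y - w|.
Proof. nia. Qed.

Lemma dist_exchange m (z a b P : zvec m) c : sqsub P (b - a) -> P 0 c = 2 ->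
  a 0 c < z 0 c -> z 0 c < b 0 c ->
  (2 %| z 0%R c - a 0%R c)%Z -> (2 %| b 0%R c - z 0%R c)%Z ->
  dist z (a + P) + dist z (b - P) < dist z a + dist z b.
Proof.
move=> hP hPc h1 h2 h3 h4.
rewrite /dist -!big_split /= (bigD1 c) //= [X in _ < X](bigD1 c) //=.
apply: ltr_leD.
  rewrite !mxE hPc; exact: abs_step.
apply: ler_sum => i _; have [k1 k2] := hP i; rewrite !mxE in k1 k2 *; exact: abs_le.
Qed.

Lemma ex_lt_sum (s : seq int) (z : int) :
  \sum_(x <- s) x < (size s)%:Z * z -> exists2 a, a \in s & a < z.
Proof.
elim: s => [|x s IH] /=; first by rewrite big_nil mul0r ltxx.
move=> h0; have h : x + \sum_(y <- s) y < ((size s).+1)%:Z * z by rewrite big_cons in h0.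
case: (ltrP x z) => hx; first by exists x; rewrite ?mem_head.
have [a ha haz] : exists2 a, a \in s & a < z by apply: IH; lia.
by exists a; rewrite // in_cons ha orbT.
Qed.

Lemma ex_gt_sum (s : seq int) (z : int) :
  (size s)%:Z * z < \sum_(x <- s) x -> exists2 a, a \in s & z < a.
Proof.
elim: s => [|x s IH] /=; first by rewrite big_nil mul0r ltxx.
move=> h0; have h : ((size s).+1)%:Z * z < x + \sum_(y <- s) y by rewrite big_cons in h0.
case: (ltrP z x) => hx; first by exists x; rewrite ?mem_head.
have [a ha haz] : exists2 a, a \in s & z < a by apply: IH; lia.
by exists a; rewrite // in_cons ha orbT.
Qed.

Lemma ex_lt (s : seq int) (z : int) :
  \sum_(x <- s) x = (size s)%:Z * z -> has (fun x => x != z) s ->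
  exists2 a, a \in s & a < z.
Proof.
elim: s => [|x s IH] //= h0.
have h : x + \sum_(y <- s) y = ((size s).+1)%:Z * z by rewrite big_cons in h0.
case: (ltrP x z) => hx; first by exists x; rewrite ?mem_head.
case: (eqVneq x z) => [exz | hxz] /=.
  move=> hs; have [a ha haz] : exists2 a, a \in s & a < z by apply: IH => //; lia.
  by exists a; rewrite // in_cons ha orbT.
move=> _; have [a ha haz] : exists2 a, a \in s & a < z by apply: ex_lt_sum; lia.
by exists a; rewrite // in_cons ha orbT.
Qed.

Lemma ex_gt (s : seq int) (z : int) :
  \sum_(x <- s) x = (size s)%:Z * z -> has (fun x => x != z) s ->
  exists2 a, a \in s & z < a.
Proof.
elim: s => [|x s IH] //= h0.
have h : x + \sum_(y <- s) y = ((size s).+1)%:Z * z by rewrite big_cons in h0.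
case: (ltrP z x) => hx; first by exists x; rewrite ?mem_head.
case: (eqVneq x z) => [exz | hxz] /=.
  move=> hs; have [a ha haz] : exists2 a, a \in s & z < a by apply: IH => //; lia.
  by exists a; rewrite // in_cons ha orbT.
move=> _; have [a ha haz] : exists2 a, a \in s & z < a by apply: ex_gt_sum; lia.
by exists a; rewrite // in_cons ha orbT.
Qed.

Lemma cong2_dvd m (x r : zvec m) : cong2 x r -> forall i, (2 %| x 0%R i - r 0%R i)%Z.
Proof. by move=> h i; rewrite -eqz_mod_dvd; apply/eqP; exact: h i. Qed.

Lemma dvd_cong2 m (x r : zvec m) : (forall i, (2 %| x 0%R i - r 0%R i)%Z) -> cong2 x r.
Proof. by move=> h i; apply/eqP; rewrite eqz_mod_dvd. Qed.

Lemma neq_row m (y z : zvec m) : y != z -> exists c, y 0 c != z 0 c.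
Proof.
move=> h; apply/existsP; apply: contraT; rewrite negb_exists => /forallP H.
move: h; apply: contraR => _; apply/eqP/rowP => i.
by have := H i; rewrite negbK => /eqP.
Qed.

Lemma dvd3 (x y w : int) : (2 %| x - w)%Z -> (2 %| y - w)%Z -> (2 %| y - x)%Z.
Proof. lia. Qed.

Lemma dvd_addP (x p w : int) : (2 %| x - w)%Z -> (2 %| p)%Z -> (2 %| x + p - w)%Z.
Proof. lia. Qed.

Lemma dvd_subP (x p w : int) : (2 %| x - w)%Z -> (2 %| p)%Z -> (2 %| x - p - w)%Z.
Proof. lia. Qed.

Definition good (R : realType) m (f : zvec m -> option rat) (r : zvec m) y :=
  cong2 y r /\ exists a, f y = Some a.

Lemma reduce (R : realType) m (f : zvec m -> option rat) (r z : zvec m)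
  (s : seq (zvec m)) :
  SBO_jump_M_convex R f -> cong2 z r ->
  (forall y, y \in s -> good R f r y) ->
  (forall i, \sum_(y <- s) y 0 i = (size s)%:Z * z 0 i) ->
  has (fun y => y != z) s ->
  exists s', [/\ (forall y, y \in s' -> good R f r y),
    (forall i, \sum_(y <- s') y 0 i = (size s')%:Z * z 0 i),
    size s' = size s, Phi z s' < Phi z s &
    \sum_(y <- s') ratr (odflt 0 (f y)) <= \sum_(y <- s) (ratr (odflt 0 (f y)) : R)].
Proof.
move=> hf hz hs hsum /hasP [y hy hyz].
have [c hc] := neq_row hyz.
have hsc : \sum_(x <- map (fun y : zvec m => y 0 c) s) x = (size (map (fun y : zvec m => y 0 c) s))%:Z * z 0 c.
  by rewrite big_map size_map.
have hhas : has (fun x => x != z 0 c) (map (fun y : zvec m => y 0 c) s).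
  by apply/hasP; exists (y 0 c) => //; apply: map_f.
have [ac /mapP [a ha ->] hac] := ex_lt hsc hhas.
have [bc /mapP [b hb ->] hbc] := ex_gt hsc hhas.
have [[hra [al hal]] [hrb [be hbe]]] := (hs a ha, hs b hb).
have hev : forall x, (2 %| (b - a) 0%R x)%Z.
  by move=> x; rewrite !mxE; apply: (dvd3 (cong2_dvd hra x) (cong2_dvd hrb x)).
have hdc : 0 < (b - a) 0 c by rewrite !mxE subr_gt0; exact: lt_trans hac hbc.
have [P [al' [be' [[hPs hPev] hPc hfa hfb hle]]]] := exchange hf hal hbe hev hdc.
have hab : a != b by apply/eqP => eab; move: hac hbc; rewrite eab; lia.
have hb' : b \in rem a s.
  by have := perm_mem (perm_to_rem ha) b; rewrite hb in_cons eq_sym (negPf hab) /=.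
pose rest := rem b (rem a s).
have hperm : perm_eq s (a :: b :: rest).
  apply: (perm_trans (perm_to_rem ha)); rewrite perm_cons; exact: perm_to_rem.
have hrest : forall y, y \in rest -> y \in s.
  by move=> x hx; apply: (mem_rem (x := a)); apply: (mem_rem (x := b)).
exists [:: a + P, b - P & rest]; split.
- move=> x; rewrite !in_cons => /orP [/eqP -> | /orP [/eqP -> | hx]]; last exact: hs (hrest _ hx).
  + split; last by exists al'.
    by apply: dvd_cong2 => i; rewrite !mxE; apply: dvd_addP (cong2_dvd hra i) (hPev i).
  + split; last by exists be'.
    by apply: dvd_cong2 => i; rewrite !mxE; apply: dvd_subP (cong2_dvd hrb i) (hPev i).
- move=> i; have := hsum i; rewrite (perm_big _ hperm) /= (perm_size hperm) /=.
  rewrite !big_cons !mxE.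
  move=> h; have h' : a 0 i + (b 0 i + \sum_(y <- rest) y 0 i) = ((size rest).+2)%:Z * z 0 i by [].
  have h2 : a 0 i + P 0 i + (b 0 i - P 0 i + \sum_(y <- rest) y 0 i) = ((size rest).+2)%:Z * z 0 i.
    lia.
  exact: h2.
- by rewrite (perm_size hperm).
- rewrite /Phi (perm_big _ hperm) /= !big_cons.
  rewrite !addrA ltrD2r.
  exact: (dist_exchange hPs hPc hac hbc (dvd3 (cong2_dvd hra c) (cong2_dvd hz c))
     (dvd3 (cong2_dvd hz c) (cong2_dvd hrb c))).
- rewrite (perm_big _ hperm) /= !big_cons hfa hfb hal hbe /=.
  rewrite !addrA lerD2r; exact: hle.
Qed.

Lemma Phi_ge0 m (z : zvec m) s : 0 <= Phi z s.
Proof. by apply: sumr_ge0 => y _; apply: sumr_ge0. Qed.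

Lemma sum_const_mem (T : eqType) (V : zmodType) (s : seq T) (z : T) (F : T -> V) :
  (forall y, y \in s -> y = z) -> \sum_(y <- s) F y = F z *+ size s.
Proof.
elim: s => [|x s IH] h; first by rewrite big_nil.
rewrite big_cons IH; last by move=> y hy; apply: h; rewrite in_cons hy orbT.
by rewrite (h x (mem_head _ _)) /= mulrS.
Qed.

Lemma all_eq_case (R : realType) m (f : zvec m -> option rat) (r z : zvec m)
  (s : seq (zvec m)) : s != [::] -> (forall y, y \in s -> good R f r y) ->
  has (fun y => y != z) s = false ->
  exists a, f z = Some a /\
    (size s)%:R * ratr a <= \sum_(y <- s) (ratr (odflt 0 (f y)) : R).
Proof.
move=> hne hs hh.
have hall : forall y, y \in s -> y = z.
  by move=> y hy; apply/eqP; apply: contraFT hh => hyz; apply/hasP; exists y.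
case: s hne hs hall {hh} => [//|y0 s0] _ hs hall.
have [_ [a ha]] := hs y0 (mem_head _ _).
rewrite (hall y0 (mem_head _ _)) in ha.
exists a; split => //.
by rewrite (sum_const_mem _ hall) ha /= mulr_natl.
Qed.

Lemma list_main (R : realType) m (f : zvec m -> option rat) (r z : zvec m) :
  SBO_jump_M_convex R f -> cong2 z r -> forall (n : nat) (s : seq (zvec m)),
  Phi z s <= n%:Z -> s != [::] ->
  (forall y, y \in s -> good R f r y) ->
  (forall i, \sum_(y <- s) y 0 i = (size s)%:Z * z 0 i) ->
  exists a, f z = Some a /\
    (size s)%:R * ratr a <= \sum_(y <- s) (ratr (odflt 0 (f y)) : R).
Proof.
move=> hf hz; elim=> [|n IH] s hPhi hne hs hsum.
  case hh : (has (fun y => y != z) s); last exact: (all_eq_case hne hs hh).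
  have [s' [_ _ _ hlt _]] := reduce hf hz hs hsum hh.
  by have := Phi_ge0 z s'; lia.
case hh : (has (fun y => y != z) s); last exact: (all_eq_case hne hs hh).
have [s' [hs' hsum' hsz hlt hle]] := reduce hf hz hs hsum hh.
have hne' : s' != [::] by rewrite -size_eq0 hsz size_eq0.
have hP' : Phi z s' <= n%:Z by lia.
have [a [ha hale]] := IH s' hP' hne' hs' hsum'.
exists a; split => //; rewrite -hsz; exact: le_trans hale hle.
Qed.



Lemma rat_dichotomy (R : realType) l p (M : 'M[rat]_(l, p)) (x : 'rV[R]_l)
  (b : 'rV[rat]_p) :
  x *m map_mx ratr M = map_mx ratr b ->
  (exists D : 'rV[rat]_l, x = map_mx ratr D) \/
  (exists u : 'rV[R]_l, u != 0 /\ u *m map_mx ratr M = 0).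
Proof.
move=> hx; case hf : (row_free M).
  left; have hfR : row_free (map_mx (@ratr R) M) by rewrite /row_free mxrank_map.
  have : (map_mx (@ratr R) b <= map_mx ratr M)%MS by rewrite -hx submxMl.
  rewrite map_submx => /submxP [D hD]; exists D.
  by apply: (row_free_inj hfR); rewrite /= -map_mxM -hD hx.
right; have hnf : ~~ row_free (map_mx (@ratr R) M).
  by rewrite /row_free mxrank_map -/(row_free M) hf.
exists (nz_row (kermx (map_mx (@ratr R) M))); split.
  by rewrite nz_row_eq0 kermx_eq0.
by apply/eqP; rewrite -sub_kermx nz_row_sub.
Qed.

Definition Mk l m (zs : 'I_l -> zvec m) (Z : pred 'I_l) : 'M[rat]_(l, 1 + m + l) :=
  row_mx (row_mx (const_mx 1 : 'M_(l, 1)) (\matrix_(k < l, i < m) (zs k 0 i)%:~R))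
         (\matrix_(k < l, j < l) ((k == j) && Z k)%:R).

Lemma Mk_mul (R : realType) l m (zs : 'I_l -> zvec m) (Z : pred 'I_l) (u : 'rV[R]_l) :
  u *m map_mx ratr (Mk zs Z) =
  row_mx (row_mx (const_mx (\sum_k u 0 k))
                 (\row_i (\sum_k u 0 k * (zs k 0 i)%:~R)))
         (\row_j ((Z j)%:R * u 0 j)).
Proof.
rewrite /Mk !map_row_mx !mul_mx_row; congr row_mx; first congr row_mx.
- by apply/rowP => j; rewrite !mxE; apply: eq_bigr => k _; rewrite !mxE rmorph1 mulr1.
- by apply/rowP => j; rewrite !mxE; apply: eq_bigr => k _; rewrite !mxE ratr_int.
apply/rowP => j; rewrite !mxE (bigD1 j) //= big1 => [|k hk].
  by rewrite !mxE eqxx /= rmorph_nat addr0 mulrC.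
by rewrite !mxE (negPf hk) /= rmorph0 mulr0.
Qed.

Lemma carath_step (R : realType) l (lam w : 'I_l -> R) :
 (forall k, 0 <= lam k) -> (forall k, lam k = 0 -> w k = 0) -> \sum_k w k = 0 ->
 (exists k, w k != 0) ->
 exists t : R, [/\ 0 <= t, (forall k, 0 <= lam k + t * w k) &
   (#|[set k | (lam k + t * w k != 0)%R]| < #|[set k | (lam k != 0)%R]|)%N ].
Proof.
move=> hpos hsupp hw0 [k0 hk0].
have [k1 hk1] : exists k, w k < 0.
  apply/existsP; apply: contraT; rewrite negb_exists => /forallP H.
  have hge : forall k, 0 <= w k by move=> k; have := H k; rewrite -leNgt.
  have := @psumr_eq0P R _ predT w (fun k _ => hge k) hw0 k0 isT.
  by move/eqP; rewrite (negPf hk0).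
case: (@arg_minP _ R _ k1 (fun k => w k < 0) (fun k => lam k / - w k) hk1).
move=> ks hks hmin.
set t := lam ks / - w ks.
have hwks : 0 < - w ks by rewrite oppr_gt0.
have ht : 0 <= t by apply: divr_ge0 => //; apply: ltW.
have hlks : lam ks != 0.
  by apply/eqP => h; move: hks; rewrite (hsupp _ h) ltxx.
exists t; split => //.
  move=> k; case: (ltrP (w k) 0) => hk.
    have h := hmin k hk.
    have hwk : 0 < - w k by rewrite oppr_gt0.
    have : t * (- w k) <= lam k by rewrite -ler_pdivlMr.
    lra.
  by apply: addr_ge0 => //; apply: mulr_ge0.
have hzero : lam ks + t * w ks = 0.
  have hw : w ks != 0 by rewrite lt_eqF.
  by rewrite /t; field; rewrite ?oppr_eq0.
rewrite (cardsD1 ks [set k | lam k != 0]) inE hlks add1n ltnS.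
apply: subset_leq_card; apply/subsetP => k; rewrite !inE.
case: (eqVneq k ks) => [-> | hne]; first by rewrite hzero eqxx.
move=> h; apply/eqP => hl; move: h; rewrite hl (hsupp _ hl) mulr0 addr0 eqxx.
by [].
Qed.

Lemma neq_rowR (R : realType) l (u : 'rV[R]_l) : u != 0 -> exists k, u 0 k != 0.
Proof.
move=> h; apply/existsP; apply: contraT; rewrite negb_exists => /forallP H.
move: h; apply: contraR => _; apply/eqP/rowP => i.
by have := H i; rewrite negbK mxE => /eqP.
Qed.

Lemma carath (R : realType) l m (zs : 'I_l -> zvec m) (z : zvec m) (c : 'I_l -> rat) :
 forall (n : nat) (lam : 'I_l -> R), (#|[set k | (lam k != 0)%R]| <= n)%N ->
 (forall k, 0 <= lam k) -> \sum_k lam k = 1 ->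
 (forall i, (z 0 i)%:~R = \sum_k lam k * (zs k 0 i)%:~R) ->
 exists q : 'I_l -> rat, [/\ (forall k, lam k = 0 -> q k = 0), (forall k, 0 <= q k),
    \sum_k q k = 1, (forall i, (z 0 i)%:~R = \sum_k q k * (zs k 0 i)%:~R) &
    \sum_k ratr (q k) * ratr (c k) <= \sum_k lam k * ratr (c k)].
Proof.
elim=> [|n IH] lam hsz hpos hsum hz.
  have h0 : forall k, lam k = 0.
    move=> k; apply/eqP; apply: contraT => hk.
    have : (0 < #|[set k | (lam k != 0)%R]|)%N by apply/card_gt0P; exists k; rewrite inE.
    by rewrite leqn0 in hsz; rewrite (eqP hsz).
  by move: hsum; rewrite big1 // => /esym/eqP; rewrite oner_eq0.
pose Z := fun k => lam k == 0.
pose x := \row_k lam k.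
pose bk : 'rV[rat]_(1 + m + l) := row_mx (row_mx (const_mx 1) (\row_i (z 0 i)%:~R)) 0.
have hx : x *m map_mx ratr (Mk zs Z) = map_mx ratr bk.
  rewrite Mk_mul !map_row_mx map_const_mx rmorph1 map_mx0.
  congr row_mx; first congr row_mx.
  - by congr const_mx; rewrite -hsum; apply: eq_bigr => k _; rewrite mxE.
  - by apply/rowP => i; rewrite !mxE ratr_int hz; apply: eq_bigr => k _; rewrite mxE.
  - apply/rowP => j; rewrite !mxE /Z; case: eqP => [->|_]; by rewrite ?mulr0 ?mul0r.
case: (rat_dichotomy hx) => [[D hD] | [u [hu0 hu]]].
  have hl : forall k, lam k = ratr (D 0 k).
    by move=> k; have := congr1 (fun M : 'rV[R]_l => M 0 k) hD; rewrite !mxE.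
  exists (fun k => D 0 k); split.
  - by move=> k hk; rewrite hl in hk; move/eqP: hk; rewrite fmorph_eq0 => /eqP.
  - by move=> k; rewrite -(ler_rat R) rmorph0 -hl.
  - apply: (fmorph_inj (@ratr R)); rewrite rmorph_sum rmorph1 -hsum.
    by apply: eq_bigr => k _; rewrite hl.
  - move=> i; apply: (fmorph_inj (@ratr R)); rewrite rmorph_sum rmorph_int hz.
    by apply: eq_bigr => k _; rewrite rmorphM rmorph_int hl.
  - rewrite [leRHS](eq_bigr (fun k => ratr (D 0 k) * ratr (c k))) //.
    by move=> k _; rewrite hl.
rewrite Mk_mul in hu; move/eqP: hu; rewrite !row_mx_eq0 => /andP [/andP [h1 h2] h3].
have hu1 : \sum_k u 0 k = 0 by move/eqP/matrixP: h1 => /(_ 0 0); rewrite !mxE.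
have hu2 : forall i, \sum_k u 0 k * (zs k 0 i)%:~R = 0.
  by move/eqP/rowP: h2 => h2 i; have := h2 i; rewrite !mxE.
have hu3 : forall j, lam j = 0 -> u 0 j = 0.
  by move/eqP/rowP: h3 => h3 j hj; have := h3 j; rewrite !mxE /Z hj eqxx mul1r.
pose sg : R := if \sum_k u 0 k * ratr (c k) <= 0 then 1 else -1.
have hsg : sg != 0 by rewrite /sg; case: ifP => _; rewrite ?oppr_eq0 oner_eq0.
pose w k := sg * u 0 k.
have hw0 : \sum_k w k = 0 by rewrite -mulr_sumr hu1 mulr0.
have hwz : forall i, \sum_k w k * (zs k 0 i)%:~R = 0.
  move=> i; under eq_bigr do rewrite -mulrA.
  by rewrite -mulr_sumr hu2 mulr0.
have hwc : \sum_k w k * ratr (c k) <= 0.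
  under eq_bigr do rewrite -mulrA.
  rewrite -mulr_sumr /sg; case: ifP => h; first by rewrite mul1r.
  by rewrite mulN1r oppr_le0; apply: ltW; rewrite ltNge h.
have hws : forall k, lam k = 0 -> w k = 0 by move=> k hk; rewrite /w hu3 // mulr0.
have hwne : exists k, w k != 0.
  by have [k hk] := neq_rowR hu0; exists k; rewrite /w mulf_neq0.
have [t [ht htpos htcard]] := carath_step hpos hws hw0 hwne.
pose lam' k := lam k + t * w k.
have hsz' : (#|[set k | (lam' k != 0)%R]| <= n)%N.
  by rewrite -ltnS; apply: leq_trans htcard hsz.
have hsum' : \sum_k lam' k = 1 by rewrite big_split /= -mulr_sumr hw0 mulr0 addr0.
have hz' : forall i, (z 0 i)%:~R = \sum_k lam' k * (zs k 0 i)%:~R.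
  move=> i; under eq_bigr do rewrite mulrDl -mulrA.
  by rewrite big_split /= -mulr_sumr hwz mulr0 addr0 hz.
have [q [hq1 hq2 hq3 hq4 hq5]] := IH lam' hsz' htpos hsum' hz'.
exists q; split => //.
  by move=> k hk; apply: hq1; rewrite /lam' hk (hws k hk) mulr0 addr0.
apply: (le_trans hq5).
have -> : \sum_k lam' k * ratr (c k) = \sum_k lam k * ratr (c k) + t * \sum_k w k * ratr (c k).
  under eq_bigr do rewrite mulrDl -mulrA.
  by rewrite big_split /= -mulr_sumr.
have := mulr_ge0_le0 ht hwc; lra.
Qed.

Lemma sum_nseq (T : Type) (V : zmodType) (a : T) n (F : T -> V) :
  \sum_(y <- nseq n a) F y = F a *+ n.
Proof. by elim: n => [|n IH]; rewrite ?big_nil // big_cons IH mulrS. Qed.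

Lemma sum_flat l (T : Type) (V : zmodType) (n : 'I_l -> nat) (zs : 'I_l -> T)
  (F : T -> V) :
  \sum_(y <- flatten [seq nseq (n k) (zs k) | k <- enum 'I_l]) F y =
  \sum_k F (zs k) *+ n k.
Proof.
rewrite big_flatten big_map big_enum /=; apply: eq_bigr => k _; exact: sum_nseq.
Qed.

Lemma size_int (T : Type) (s : seq T) : (size s)%:Z = \sum_(y <- s) (1 : int).
Proof. by elim: s => [|x s IH]; rewrite ?big_nil // big_cons -IH /= intS. Qed.

Lemma common_den l (q : 'I_l -> rat) : (forall k, 0 <= q k) ->
  exists (D : nat) (n : 'I_l -> nat), (0 < D)%N /\ forall k, (n k)%:R = q k * D%:R.
Proof.
move=> hq.
pose Dk (k : 'I_l) := (\prod_(j | j != k) `|denq (q j)|)%N.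
exists (\prod_j `|denq (q j)|)%N, (fun k => `|numq (q k)|%N * Dk k)%N; split.
  by apply: prodn_gt0 => j; rewrite absz_gt0 denq_neq0.
move=> k; rewrite (bigD1 k) //= !natrM -/(Dk k) mulrA; congr (_ * _).
rewrite !natr_absz !ger0_norm ?numq_ge0 ?denq_ge0 //.
by rewrite numqE.
Qed.



Lemma rat_case (R : realType) m (f : zvec m -> option rat) (r : zvec m) l
  (zs : 'I_l -> zvec m) (z : zvec m) (q : 'I_l -> rat) :
  SBO_jump_M_convex R f -> (forall k, cong2 (zs k) r) -> cong2 z r ->
  (forall k, 0 <= q k) -> \sum_k q k = 1 ->
  (forall i, (z 0 i)%:~R = \sum_k q k * (zs k 0 i)%:~R) ->
  (forall k, 0 < q k -> exists a, f (zs k) = Some a) ->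
  exists a, f z = Some a /\
    ratr a <= \sum_k ratr (q k) * (ratr (odflt 0 (f (zs k))) : R).
Proof.
move=> hf hzs hz hq hq1 hqz hfin.
have [D [n [hD hn]]] := common_den hq.
pose s := flatten [seq nseq (n k) (zs k) | k <- enum 'I_l].
have hsizeR : (size s)%:R = D%:R :> rat.
  rewrite -[(size s)%:R]/(((size s)%:Z)%:~R : rat) size_int sum_flat rmorph_sum /=.
  under eq_bigr do rewrite rmorphMn rmorph1 hn.
  by rewrite -mulr_suml hq1 mul1r.
have hsize : size s = D by apply/eqP; rewrite -(eqr_nat rat) hsizeR.
have hqpos : forall k, (0 < n k)%N -> 0 < q k.
  move=> k hk; rewrite lt0r hq andbT; apply/eqP => h0.
  by move: (hn k); rewrite h0 mul0r => /eqP; rewrite pnatr_eq0; move/eqP; lia.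
have hmem : forall y, y \in s -> good R f r y.
  move=> y /flattenP [t /mapP [k _ ->] hy]; rewrite mem_nseq in hy.
  case/andP: hy => hnk /eqP ->; split; first exact: hzs.
  exact: hfin (hqpos k hnk).
have hsumi : forall i, \sum_(y <- s) y 0 i = (size s)%:Z * z 0 i.
  move=> i; apply: (@intr_inj rat); rewrite sum_flat rmorph_sum rmorphM /=.
  rewrite -[((size s)%:Z)%:~R]/((size s)%:R : rat) hsizeR hqz mulr_sumr.
  apply: eq_bigr => k _; rewrite rmorphMn -mulr_natl hn.
  by rewrite -mulrA mulrCA.
have hne : s != [::] by rewrite -size_eq0 hsize; lia.
have hPhi : Phi z s <= (`|Phi z s|%N)%:Z by rewrite abszE ler_norm.
have [a [ha hle]] := list_main hf hz hPhi hne hmem hsumi.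
exists a; split => //.
rewrite hsize sum_flat in hle.
have hDpos : (0 : R) < D%:R by rewrite ltr0n.
rewrite -(ler_pM2l hDpos); apply: (le_trans hle).
rewrite mulr_sumr; apply: ler_sum => k _.
rewrite -[_ *+ n k]mulr_natl -(ratr_nat R (n k)) hn rmorphM rmorph_nat.
by rewrite le_eqVlt; apply/orP; left; apply/eqP; ring.
Qed.

Unset Implicit Arguments.

Theorem lemma19 (R : realType) (m : nat) (f : 'rV[int]_m -> option rat)
    (r : 'rV[int]_m) (l : nat) (zs : 'I_l -> 'rV[int]_m) (lam : 'I_l -> R)
    (z : 'rV[int]_m) :
  SBO_jump_M_convex R f ->
  (forall k, cong2 (zs k) r) ->
  (forall k, 0 <= lam k) ->
  \sum_(k < l) lam k = 1 ->
  (forall i : 'I_m, (z 0 i)%:~R = \sum_(k < l) lam k * (zs k 0 i)%:~R) ->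
  cong2 z r ->
  (forall k, 0 < lam k -> exists a, f (zs k) = Some a) ->
  ext_le (f z) (\sum_(k < l) lam k * ratr (odflt 0 (f (zs k)))).
Proof.
move=> hf hzs hlam hsum hz hzr hfin.
have [q [hq0 hqpos hq1 hqz hobj]] :=
  @carath R l m zs z (fun k => odflt 0 (f (zs k))) _ lam (max_card _) hlam hsum hz.
have hfin' : forall k, 0 < q k -> exists a, f (zs k) = Some a.
  move=> k hk; apply: hfin; rewrite lt0r hlam andbT; apply/eqP => h0.
  by move: hk; rewrite (hq0 k h0) ltxx.
have [a [ha hle]] := rat_case hf hzs hzr hqpos hq1 hqz hfin'.
by rewrite ha /=; apply: le_trans hle hobj.
Qed.
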